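(* There is an absolute constant $\alpha>0$ such that for every integer $k>5$ there exists a $k$-terminal network $(G,c)$ such that every mimicking network $(G',c')$ of $(G,c)$ satisfies $|V(G')|\ge 2^{\alpha k}$. Moreover, $G$ can be taken to be bipartite with all the terminals on one side of the bipartition and all the non-terminals on the other side.
   Context: A network $(G,c)$ is an undirected graph $G$ with edge costs $c:E(G)\to\mathbb{R}^+$; its size is $|V(G)|$. A $k$-terminal network additionally has a set $Q=\{q_1,\dots,q_k\}\subseteq V(G)$ of distinguished vertices called terminals. For $S\subset Q$ with $S\neq\emptyset,Q$, write $\bar S=Q\setminus S$; a cut $(W,V(G)\setminus W)$ is $S$-separating if $W\cap Q\in\{S,\bar S\}$. The cost of a cut is the total cost of the edges with exactly one endpoint in $W$ (the cutset). $\mathrm{mincut}_{G,c}(S,\bar S)$ denotes the minimum cost of an $S$-separating cut. A mimicking network of a $k$-terminal network $(G,c)$ is a $k$-terminal network $(G',c')$ with the same terminal set $Q$ such that $\mathrm{mincut}_{G',c'}(S,\bar S)=\mathrm{mincut}_{G,c}(S,\bar S)$ for every $S\subset Q$ with $S\neq\emptyset,Q$. *)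

(* Defs.v *)
From mathcomp Require Import all_boot.
From Stdlib Require Import Reals.

Set Implicit Arguments.
Unset Strict Implicit.
Unset Printing Implicit Defensive.

(* A k-terminal network: a finite simple undirected graph (symmetric,
   irreflexive adjacency), a cost function that is symmetric and strictly
   positive on edges (only its values on edges are ever used), and k distinct
   terminals q_0, ..., q_{k-1} given by an injective labelling. *)
Record network (k : nat) := Network {
  netV : finType;
  adj : rel netV;
  cost : netV -> netV -> R;
  term : 'I_k -> netV;
  adj_sym : symmetric adj;
  adj_irr : irreflexive adj;
  cost_sym : forall x y, cost x y = cost y x;
  cost_pos : forall x y, adj x y -> (0 < cost x y)%R;
  term_inj : injective term
}.

Section Cuts.
Variables (k : nat) (N : network k).

Definition cut_cost (W : {set netV N}) : R :=
  \big[Rplus/0%R]_(x in W) \big[Rplus/0%R]_(y | (y \notin W) && adj x y) cost x y.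

Definition separating (S : {set 'I_k}) (W : {set netV N}) : bool :=
  ([set i | term N i \in W] == S) || ([set i | term N i \in W] == ~: S).

(* minimum cost of an S-separating cut; the set term @: S is always
   S-separating, so the minimum is taken over a nonempty family *)
Definition mincut (S : {set 'I_k}) : R :=
  foldr Rmin (cut_cost (term N @: S))
    [seq cut_cost W | W <- enum [pred W : {set netV N} | separating S W]].

End Cuts.

Definition mimicking (k : nat) (N' N : network k) : Prop :=
  forall S : {set 'I_k}, S != set0 -> S != setT -> mincut N' S = mincut N S.

Definition terminal_bipartite (k : nat) (N : network k) : Prop :=
  forall x y : netV N, adj x y -> (x \in codom (term N)) != (y \in codom (term N)).

(* Main.v *)
Require Import Defs.
From mathcomp Require Import all_boot.
From Stdlib Require Import Reals.
From HB Require Import structures.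
From Stdlib Require Import Lra Classical IndefiniteDescription.
Import ssreflect ssrfun ssrbool eqtype ssrnat seq fintype finset bigop finfun div.
From mathcomp Require Import zify.
Section P1s.
Local Open Scope R_scope.


Section Gen.
Variable T : eqType.
Variable f : T -> R.

Lemma foldr_Rmin_le x0 s W : W \in s -> foldr Rmin x0 [seq f W | W <- s] <= f W.
Proof.
elim: s => //= a s IH; rewrite in_cons => /orP [/eqP -> | h].
  exact: Rmin_l.
exact: Rle_trans (Rmin_r _ _) (IH h).
Qed.

Lemma foldr_Rmin_ge x0 s b : b <= x0 -> (forall W, W \in s -> b <= f W) ->
  b <= foldr Rmin x0 [seq f W | W <- s].
Proof.
move=> h0; elim: s => //= a s IH H.
apply: Rmin_glb; first by apply: H; rewrite mem_head.
by apply: IH => W hW; apply: H; rewrite in_cons hW orbT.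
Qed.

Lemma foldr_Rmin_attain x0 s : foldr Rmin x0 [seq f W | W <- s] = x0 \/
  exists2 W, W \in s & foldr Rmin x0 [seq f W | W <- s] = f W.
Proof.
elim: s => [|a s IH] /=; first by left.
rewrite /Rmin; case: Rle_dec => _.
  by right; exists a => //; rewrite mem_head.
case: IH => [->|[W hW ->]]; first by left.
by right; exists W => //; rewrite in_cons hW orbT.
Qed.
End Gen.

Section Net.
Variables (k : nat) (N : network k).

Lemma term_sep S : separating S (term N @: S).
Proof.
rewrite /separating; apply/orP; left; apply/eqP/setP => i.
rewrite in_set; apply/imsetP/idP => [[j hj /term_inj ->] //|h]; by exists i.
Qed.

Lemma mincut_le S (W : {set netV N}) : separating S W -> mincut N S <= cut_cost W.
Proof.
move=> h; apply: foldr_Rmin_le; by rewrite mem_enum.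
Qed.

Lemma mincut_ge S b : (forall W : {set netV N}, separating S W -> b <= cut_cost W) -> b <= mincut N S.
Proof.
move=> H; apply: foldr_Rmin_ge; first exact: H (term_sep S).
by move=> W; rewrite mem_enum => /H.
Qed.

Lemma mincut_attain S : exists W : {set netV N}, separating S W /\ mincut N S = cut_cost W.
Proof.
case: (@foldr_Rmin_attain _ (@cut_cost _ N) (@cut_cost _ N (term N @: S))
   (enum [pred W : {set netV N} | separating S W])) => [h|[W hW h]].
  by exists (term N @: S); split; [exact: term_sep | exact: h].
by exists W; split => //; move: hW; rewrite mem_enum.
Qed.
End Net.

End P1s.


Lemma leq_expb a b e : (a <= b)%N -> (a ^ e <= b ^ e)%N.
Proof. by move=> h; elim: e => [|e IH] //; rewrite !expnS leq_mul. Qed.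

Lemma siegel_arith m c : (c <= m)%N ->
  ((m.+1 * (m.+2 ^ m.+1) + 1) ^ c < (m.+2 ^ m.+1).+1 ^ m.+1)%N.
Proof.
move=> hc; set H := m.+2 ^ m.+1.
have H1 : (1 <= H)%N by rewrite expn_gt0.
apply: (@leq_ltn_trans ((m.+2 * H) ^ m)).
  apply: (@leq_trans ((m.+1 * H + 1) ^ m)).
    by apply: leq_pexp2l; [rewrite addn1 | ].
  by apply: leq_expb; rewrite mulSn addnC leq_add2r.
apply: (@leq_trans (H ^ m.+1)); last by rewrite leq_exp2r // leqnSn.
rewrite expnMn expnS [H * _]mulnC [_ * H ^ m]mulnC ltn_pmul2l; last by rewrite expn_gt0 H1.
by rewrite /H ltn_exp2l.
Qed.

Lemma siegel (m : nat) (E : finType) (chi : E -> 'I_m.+1 -> nat) :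
  (forall e j, chi e j <= 1)%N -> (#|E| <= m)%N ->
  exists y y' : 'I_m.+1 -> nat,
    (forall j, y j <= m.+2 ^ m.+1)%N /\ (forall j, y' j <= m.+2 ^ m.+1)%N /\
    (exists j, y j <> y' j) /\
    forall e, (\sum_(j < m.+1) y j * chi e j = \sum_(j < m.+1) y' j * chi e j)%N.
Proof.
move=> hchi hE; set H := m.+2 ^ m.+1.
pose phi (y : {ffun 'I_m.+1 -> 'I_H.+1}) : {ffun E -> 'I_(m.+1 * H).+1} :=
  [ffun e => inord (\sum_(j < m.+1) y j * chi e j)].
have bnd (y : {ffun 'I_m.+1 -> 'I_H.+1}) e : (\sum_(j < m.+1) y j * chi e j <= m.+1 * H)%N.
  apply: (@leq_trans (\sum_(j < m.+1) H)); last by rewrite sum_nat_const card_ord.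
  apply: leq_sum => j _; apply: (@leq_trans (y j * 1)).
    by rewrite leq_mul2l hchi orbT.
  by rewrite muln1 -ltnS.
have ninj : ~ injective phi.
  move=> /leq_card; rewrite !card_ffun !card_ord => h.
  have := @siegel_arith m _ hE; rewrite -/H addn1 => h2.
  by move: (leq_ltn_trans h h2); rewrite ltnn.
have [y [y' [hyy hne]]] : exists y y', phi y = phi y' /\ y <> y'.
  apply: NNPP => hn; apply: ninj => y y' he; apply: NNPP => hne; apply: hn.
  by exists y, y'.
exists (fun j => nat_of_ord (y j)), (fun j => nat_of_ord (y' j)).
split; first by move=> j; rewrite -ltnS.
split; first by move=> j; rewrite -ltnS.
split.
  apply: NNPP => hn; apply: hne; apply/ffunP => j; apply: val_inj.
  by apply: NNPP => h; apply: hn; exists j.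
move=> e; have := congr1 (fun f : {ffun E -> _} => nat_of_ord (f e)) hyy; rewrite /phi !ffunE /=.
by rewrite !inordK // ltnS; apply: bnd.
Qed.


Lemma digit_split B M (a : nat -> nat) A :
  (\sum_(i < M.+1) a i * B ^ i + A * B ^ M.+1 =
   a 0 + B * (\sum_(i < M) a i.+1 * B ^ i + A * B ^ M))%N.
Proof.
rewrite big_ord_recl /= expn0 muln1 -addnA; congr (_ + _).
rewrite mulnDr big_distrr /=; congr (_ + _).
  by apply: eq_bigr => i _; rewrite /bump /= add1n expnS mulnCA.
by rewrite expnS mulnCA.
Qed.

Lemma digits_unique B M (a b : nat -> nat) A A' : (0 < B)%N ->
  (forall i, i < M -> a i < B)%N -> (forall i, i < M -> b i < B)%N ->
  (\sum_(i < M) a i * B ^ i + A * B ^ M = \sum_(i < M) b i * B ^ i + A' * B ^ M)%N ->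
  (forall i, i < M -> a i = b i)%N /\ A = A'.
Proof.
move=> B0; elim: M a b => [|M IH] a b ha hb.
  by rewrite !big_ord0 !add0n !expn0 !muln1.
rewrite !digit_split => h.
have h0 : a 0 = b 0.
  have := congr1 (modn^~ B) h; rewrite ![_ + B * _]addnC ![B * _]mulnC !modnMDl !modn_small //.
    by apply: hb. by apply: ha.
move: h; rewrite h0 => /addnI /eqP; rewrite eqn_mul2l eqn0Ngt B0 /= => /eqP h.
have [IH1 IH2] := IH (fun i => a i.+1) (fun i => b i.+1)
   (fun i hi => ha i.+1 hi) (fun i hi => hb i.+1 hi) h.
split=> // -[|i] hi //; exact: IH1.
Qed.


Lemma RplusA' : associative Rplus. Proof. move=> x y z; lra. Qed.
Lemma RmultA' : associative Rmult. Proof. move=> x y z; ring. Qed.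
HB.instance Definition _ := Monoid.isComLaw.Build R 0%R Rplus RplusA' Rplus_comm Rplus_0_l.
HB.instance Definition _ := Monoid.isComLaw.Build R 1%R Rmult RmultA' Rmult_comm Rmult_1_l.
HB.instance Definition _ := Monoid.isMulLaw.Build R 0%R Rmult Rmult_0_l Rmult_0_r.
HB.instance Definition _ := Monoid.isAddLaw.Build R Rmult Rplus Rmult_plus_distr_r Rmult_plus_distr_l.

Lemma INR_sum (I : Type) (r : seq I) (P : pred I) (f : I -> nat) :
  INR (\sum_(i <- r | P i) f i) = \big[Rplus/0%R]_(i <- r | P i) INR (f i).
Proof. exact: (big_morph INR plus_INR). Qed.

Section NP.
Variables (k : nat) (N : network k).
Definition chi (W : {set netV N}) (e : netV N * netV N) : nat :=
  [&& e.1 \in W, e.2 \notin W & adj e.1 e.2].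

Lemma cut_expand W : cut_cost W =
  \big[Rplus/0%R]_(e : netV N * netV N) (cost e.1 e.2 * INR (chi W e))%R.
Proof.
rewrite /cut_cost -(pair_big xpredT xpredT (fun x z => (cost x z * INR (chi W (x, z)))%R)) /=.
rewrite big_mkcond; apply: eq_bigr => x _.
rewrite big_mkcond /=; case hx: (x \in W).
  apply: eq_bigr => z _; rewrite /chi /= hx /=.
  by case: (_ && _) => /=; rewrite ?Rmult_1_r ?Rmult_0_r.
rewrite big1 // => z _; rewrite /chi /= hx /=; ring.
Qed.

Lemma weighted_cut M (W : 'I_M -> {set netV N}) (y : 'I_M -> nat) :
  \big[Rplus/0%R]_(j < M) (INR (y j) * cut_cost (W j))%R =
  \big[Rplus/0%R]_(e : netV N * netV N)
     (cost e.1 e.2 * INR (\sum_(j < M) y j * chi (W j) e))%R.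
Proof.
under eq_bigr => j _ do rewrite cut_expand big_distrr /=.
rewrite exchange_big /=; apply: eq_bigr => e _.
rewrite INR_sum big_distrr /=; apply: eq_bigr => j _.
rewrite mult_INR; ring.
Qed.
End NP.


Lemma bin_sum p j : (j < 2 ^ p)%N -> (\sum_(r < p) odd (j %/ 2 ^ r) * 2 ^ r = j)%N.
Proof.
elim: p j => [|p IH] j hj.
  by rewrite big_ord0; move: hj; rewrite expn0 ltnS leqn0 => /eqP.
rewrite big_ord_recl /= expn0 divn1 muln1.
have hj2 : (j %/ 2 < 2 ^ p)%N by rewrite ltn_divLR // -expnSr.
transitivity (odd j + 2 * \sum_(i < p) odd (j %/ 2 %/ 2 ^ i) * 2 ^ i)%N.
  congr (_ + _); rewrite big_distrr /=; apply: eq_bigr => i _.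
  by rewrite /bump /= add1n expnS -divnMA mulnCA.
rewrite (IH _ hj2).
by rewrite -{3}(odd_double_half j) divn2 -muln2 mulnC.

Qed.

Lemma geom_sum p : (\sum_(r < p) 2 ^ r = (2 ^ p).-1)%N.
Proof.
elim: p => [|p IH]; first by rewrite big_ord0.
rewrite big_ord_recr /= IH expnS.
have : (0 < 2 ^ p)%N by rewrite expn_gt0.
lia.
Qed.

Set Implicit Arguments. Unset Strict Implicit.


Section Constr.
Variable p : nat.
Definition LL := (2 ^ p)%N.
Definition mm := LL.-1.
Definition MM := mm.+1.
Definition HH := (mm.+2 ^ mm.+1)%N.
Definition BB := (MM * HH + 1)%N.
Definition DD := (BB ^ MM)%N.

Lemma MM_LL : MM = LL.
Proof. by rewrite /MM /mm prednK // /LL expn_gt0. Qed.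
Lemma BB_gt0 : (0 < BB)%N. Proof. by rewrite /BB addn1. Qed.
Lemma DD_gt0 : (0 < DD)%N. Proof. by rewrite /DD expn_gt0 BB_gt0. Qed.

Definition wt (i : 'I_MM) (q : 'I_p.+2) : nat :=
  if q == 0 :> nat then (DD * (2 * i + 2) + BB ^ i)%N
  else if q == 1 :> nat then (DD * LL)%N else (DD * 2 ^ (q - 2))%N.

Lemma wt_gt0 i q : (0 < wt i q)%N.
Proof.
have := DD_gt0; rewrite /wt; case: ifP => _; first by lia.
case: ifP => _; rewrite muln_gt0 => ->; by rewrite ?expn_gt0.
Qed.

Definition VV := ('I_p.+2 + 'I_MM)%type.
Definition adjV (x y : VV) : bool :=
  match x, y with inl _, inr _ | inr _, inl _ => true | _, _ => false end.
Definition wtV (x y : VV) : nat :=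
  match x, y with inl q, inr i | inr i, inl q => wt i q | _, _ => 0%N end.
Definition costV (x y : VV) : R := INR (wtV x y).

Lemma adjV_sym : symmetric adjV. Proof. by case=> a [] b. Qed.
Lemma adjV_irr : irreflexive adjV. Proof. by case. Qed.
Lemma costV_sym x y : costV x y = costV y x. Proof. by case: x y => a [] b. Qed.
Lemma costV_pos x y : adjV x y -> (0 < costV x y)%R.
Proof.
case: x y => a [] b //= _; rewrite /costV /=; apply: lt_0_INR; apply/ltP; exact: wt_gt0.
Qed.
Lemma inl_inj' : injective (@inl 'I_p.+2 'I_MM). Proof. by move=> a b []. Qed.

Definition GG : network p.+2 :=
  @Network p.+2 VV adjV costV inl adjV_sym adjV_irr costV_sym costV_pos inl_inj'.
End Constr.


Section Cut.
Variable p : nat.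
Local Notation G := (GG p).

Definition ws (i : 'I_(MM p)) (X : {set 'I_p.+2}) : nat := (\sum_(q in X) wt i q)%N.

Definition cutn (W : {set VV p}) : nat :=
  (\sum_(i < MM p) (if inr i \in W then \sum_(q | inl q \notin W) wt i q
                    else \sum_(q | inl q \in W) wt i q))%N.

Lemma cut_nat (W : {set netV G}) : cut_cost W = INR (cutn W).
Proof.
rewrite /cut_cost.
have -> : \big[Rplus/0%R]_(x in W) \big[Rplus/0%R]_(y | (y \notin W) && adj x y) cost x y =
   INR (\sum_(x in W) \sum_(y | (y \notin W) && adjV x y) wtV x y).
  rewrite INR_sum; apply: eq_bigr => x _; by rewrite INR_sum.
congr INR; rewrite /cutn big_sumType /=.
under eq_bigr => q _ do rewrite big_sumType /= big1_eq add0n.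
under [X in (_ + X)%N]eq_bigr => i _ do rewrite big_sumType /= [X in (_ + X)%N]big1_eq addn0.
rewrite exchange_big /= [RHS](bigID (fun i => inr i \in W)) /=.
rewrite addnC; congr addn.
  by apply: eq_bigr => i hi; rewrite hi; apply: eq_bigl => q; rewrite andbT.
by apply: eq_big => [i|i]; [rewrite andbT | rewrite andbT => /negbTE ->].
Qed.

Definition fS (S : {set 'I_p.+2}) : nat := (\sum_(i < MM p) minn (ws i S) (ws i (~: S)))%N.

Lemma sum_in (i : 'I_(MM p)) (W : {set VV p}) :
  (\sum_(q | inl q \in W) wt i q = ws i [set q | inl q \in W])%N.
Proof. by apply: eq_bigl => q; rewrite finset.inE. Qed.
Lemma sum_notin (i : 'I_(MM p)) (W : {set VV p}) :
  (\sum_(q | inl q \notin W) wt i q = ws i (~: [set q | inl q \in W]))%N.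
Proof. by apply: eq_bigl => q; rewrite !finset.inE. Qed.

Lemma cutn_ge S (W : {set VV p}) : separating (k:=p.+2) (N:=G) S W -> (fS S <= cutn W)%N.
Proof.
rewrite /separating /= => hW; rewrite /fS /cutn; apply: leq_sum => i _.
rewrite sum_in sum_notin.
case/orP: hW => /eqP ->; case: (inr i \in W); rewrite ?setCK ?geq_minl ?geq_minr //.
Qed.

Definition Wopt (S : {set 'I_p.+2}) : {set VV p} :=
  [set x | match x with inl q => q \in S | inr i => (ws i (~: S) <= ws i S)%N end].

Lemma Wopt_T S : [set q | inl q \in Wopt S] = S.
Proof. by apply/setP => q; rewrite !finset.inE. Qed.

Lemma Wopt_sep S : separating (k:=p.+2) (N:=G) S (Wopt S).
Proof. by rewrite /separating /= Wopt_T eqxx. Qed.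

Lemma cutn_Wopt S : cutn (Wopt S) = fS S.
Proof.
rewrite /cutn /fS; apply: eq_bigr => i _; rewrite sum_in sum_notin Wopt_T finset.inE.
rewrite /minn; by case: leqP.
Qed.

Lemma mincut_G S : mincut G S = INR (fS S).
Proof.
apply: Rle_antisym.
  by rewrite -cutn_Wopt -cut_nat; apply: mincut_le; apply: Wopt_sep.
apply: mincut_ge => W hW; rewrite cut_nat; apply: le_INR; apply/leP; exact: cutn_ge.
Qed.
End Cut.


Section Rows.
Variable p : nat.

Definition Srow (j : 'I_(MM p)) : {set 'I_p.+2} :=
  [set q : 'I_p.+2 | (q == 1 :> nat) || ((2 <= q)%N && odd (j %/ 2 ^ (q - 2)))].

Lemma sum3 (F : 'I_p.+2 -> nat) :
  (\sum_(q < p.+2) F q = F ord0 + F (lift ord0 ord0) + \sum_(r < p) F (lift ord0 (lift ord0 r)))%N.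
Proof. by rewrite big_ord_recl big_ord_recl addnA. Qed.

Lemma ws_mk i (X : {set 'I_p.+2}) : ws i X = (\sum_(q < p.+2) (q \in X) * wt i q)%N.
Proof. by rewrite /ws big_mkcond; apply: eq_bigr => q _; case: (q \in X); rewrite ?mul1n. Qed.

Lemma j_lt (j : 'I_(MM p)) : (j < 2 ^ p)%N.
Proof. by rewrite -/(LL p) -MM_LL. Qed.

Lemma ws_S i j : ws i (Srow j) = (DD p * (LL p + j))%N.
Proof.
rewrite ws_mk sum3 /Srow !finset.inE /= mul0n add0n mul1n.
rewrite mulnDr; congr addn.
rewrite -{2}(@bin_sum p j (j_lt j)) big_distrr /=; apply: eq_bigr => r _.
rewrite finset.inE /wt /=.
have -> : (bump 0 (bump 0 r) - 2 = r)%N by rewrite /bump /= !add1n subn2.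
by rewrite mulnCA.

Qed.

Lemma bin_compl (j : nat) : (j < 2 ^ p)%N ->
  (\sum_(r < p) (~~ odd (j %/ 2 ^ r)) * 2 ^ r = (2 ^ p).-1 - j)%N.
Proof.
move=> hj; have := geom_sum p.
have -> : (\sum_(r < p) 2 ^ r = \sum_(r < p) odd (j %/ 2 ^ r) * 2 ^ r +
                             \sum_(r < p) (~~ odd (j %/ 2 ^ r)) * 2 ^ r)%N.
  by rewrite -big_split /=; apply: eq_bigr => r _; case: odd; rewrite ?mul1n ?mul0n ?addn0.
move=> h; have := @bin_sum p j hj; lia.
Qed.

Lemma ws_Sc i j : ws i (~: Srow j) = (DD p * (2 * i + 2) + BB p ^ i + DD p * ((LL p).-1 - j))%N.
Proof.
rewrite ws_mk sum3 /Srow !finset.inE /= mul1n mul0n addn0.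
congr addn.
rewrite /LL -(@bin_compl j (j_lt j)) big_distrr /=; apply: eq_bigr => r _.
rewrite !finset.inE /wt /=.
have -> : (bump 0 (bump 0 r) - 2 = r)%N by rewrite /bump /= !add1n subn2.
by rewrite mulnCA.
Qed.

Definition Gj (j : 'I_(MM p)) : nat :=
  (\sum_(i < MM p) (if (j <= i)%N then LL p + j else 2 * i + 2 + ((LL p).-1 - j)))%N.

Lemma fS_row j : fS (Srow j) =
  (DD p * Gj j + \sum_(i < MM p) (i < j)%N * BB p ^ i)%N.
Proof.
rewrite /fS /Gj big_distrr -big_split /=; apply: eq_bigr => i _.
rewrite ws_S ws_Sc.
have hB : (BB p ^ i < DD p)%N by rewrite /DD ltn_exp2l // /BB addn1 ltnS muln_gt0 expn_gt0.
have hj := j_lt j.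
have hL : LL p = (2 ^ p)%N by [].
have hi : (i < 2 ^ p)%N := j_lt i.
move: hB hj hL hi; generalize (DD p) (BB p ^ i)%N (LL p) (2 ^ p)%N => d b l q hB hj hL hi.
case: leqP => hji.
  rewrite mul0n addn0; apply/minn_idPl.
  have h1 : (l + j <= 2 * i + 2 + (l.-1 - j))%N by lia.
  rewrite -addnA [(b + _)%N]addnC addnA -mulnDr; apply: leq_trans (leq_addr _ _).
  by rewrite leq_mul2l h1 orbT.
rewrite mul1n -addnA [(b + _)%N]addnC addnA -mulnDr; apply/minn_idPr.
have h1 : (2 * i + 2 + (l.-1 - j) + 1 <= l + j)%N by lia.
apply: (@leq_trans (d * (2 * i + 2 + (l.-1 - j) + 1))).
  nia.
nia.
Qed.
End Rows.


Section Dig.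
Variable p : nat.
Local Notation M := (MM p).

Definition dig (y : 'I_M -> nat) (i : nat) : nat := (\sum_(j < M) y j * (i < j))%N.
Definition topd (y : 'I_M -> nat) : nat := (\sum_(j < M) y j * Gj j)%N.

Lemma weighted_f (y : 'I_M -> nat) :
  (\sum_(j < M) y j * fS (Srow j) =
   \sum_(i < M) dig y i * BB p ^ i + topd y * BB p ^ M)%N.
Proof.
under eq_bigr => j _ do rewrite fS_row mulnDr.
rewrite big_split /= addnC; congr addn.
  under eq_bigr => j _ do rewrite big_distrr /=.
  rewrite exchange_big /=; apply: eq_bigr => i _.
  rewrite /dig big_distrl /=; apply: eq_bigr => j _; by rewrite mulnA.
rewrite /topd big_distrl /= /DD; apply: eq_bigr => j _; by rewrite mulnCA mulnC.
Qed.

Lemma dig_bound (y : 'I_M -> nat) i : (forall j, y j <= HH p)%N -> (dig y i < BB p)%N.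
Proof.
move=> hy; rewrite /dig /BB addn1 ltnS.
apply: (@leq_trans (\sum_(j < M) HH p)); last by rewrite sum_nat_const card_ord.
apply: leq_sum => j _; apply: (@leq_trans (y j * 1)); last by rewrite muln1.
by rewrite leq_mul2l leq_b1 orbT.
Qed.

Lemma dig_step (y : 'I_M -> nat) (j : 'I_M) : (0 < j)%N -> dig y j.-1 = (y j + dig y j)%N.
Proof.
move=> hj; rewrite /dig (bigD1 j) //= (bigD1 j (P := xpredT)) //=.
rewrite prednK // ltnn muln0 add0n leqnn muln1; congr addn.
apply: eq_bigr => l hl; congr muln.
have : (nat_of_ord l != j) by [].
move: hj; case: (nat_of_ord j) => // jj _ /=; lia.
Qed.

Lemma Gj0_pos (j0 : 'I_M) : (j0 == 0 :> nat) -> (0 < Gj j0)%N.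
Proof.
move=> /eqP h; rewrite /Gj (bigD1 ord0) //= h leq0n /LL.
by rewrite addn0 ltn_addr // expn_gt0.
Qed.

Lemma f_inj (y y' : 'I_M -> nat) : (forall j, y j <= HH p)%N -> (forall j, y' j <= HH p)%N ->
  (\sum_(j < M) y j * fS (Srow j) = \sum_(j < M) y' j * fS (Srow j))%N ->
  forall j, y j = y' j.
Proof.
move=> hy hy'; rewrite !weighted_f => h.
have [hd ht] := @digits_unique _ _ _ _ _ _ (BB_gt0 p) (fun i _ => dig_bound i hy) (fun i _ => dig_bound i hy') h.
have hpos : forall j : 'I_M, (0 < j)%N -> y j = y' j.
  move=> j hj; have e1 := dig_step y hj; have e2 := dig_step y' hj.
  have h1 : (j.-1 < M)%N by apply: leq_ltn_trans (leq_pred _) (ltn_ord j).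
  have h2 := hd _ (ltn_ord j); rewrite (hd _ h1) e2 in e1; lia.
move=> j; case: (posnP j) => hj; last exact: hpos.
move: ht; rewrite /topd (bigD1 j) //= (bigD1 j (P := xpredT)) //=.
rewrite (eq_bigr (fun l => y' l * Gj l)%N); last first.
  move=> l hl; rewrite hpos //; rewrite lt0n; apply: contraNneq hl => e.
  by apply/eqP/val_inj; rewrite /= e hj.
move=> /addIn /eqP; rewrite eqn_mul2r => /orP [|/eqP //].
by rewrite eqn0Ngt Gj0_pos // hj.
Qed.
End Dig.


Lemma Srow_ne0 p j : Srow (p:=p) j != set0.
Proof. by apply/set0Pn; exists (lift ord0 ord0); rewrite finset.inE. Qed.
Lemma Srow_neT p j : Srow (p:=p) j != setT.
Proof. by apply/eqP => /setP /(_ ord0); rewrite !finset.inE. Qed.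

Lemma GG_bip p : terminal_bipartite (GG p).
Proof.
have hl q : (@inl 'I_p.+2 'I_(MM p) q) \in codom (term (GG p)) by apply/codomP; exists q.
have hr i : (@inr 'I_p.+2 'I_(MM p) i) \notin codom (term (GG p)) by apply/codomP => -[q].
by case=> [q|i] [q'|i'] //= _; rewrite ?hl ?(negbTE (hr _)).
Qed.

Lemma GG_lower p (N' : network p.+2) : mimicking N' (GG p) -> (2 ^ p <= #|netV N'| * #|netV N'|)%N.
Proof.
move=> hm; rewrite leqNgt; apply/negP => hlt.
pose W (j : 'I_(MM p)) : {set netV N'} :=
  proj1_sig (constructive_indefinite_description _ (@mincut_attain _ N' (Srow j))).
have hW j : mincut N' (Srow j) = cut_cost (W j).
  by rewrite /W; case: constructive_indefinite_description => /= w [_ ->].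
have hE : (#|{: netV N' * netV N'}| <= mm p)%N.
  by rewrite card_prod -ltnS -/(MM p) MM_LL.
have [y [y' [hy [hy' [[j0 hj0] he]]]]] := @siegel (mm p) _ (fun e j => @chi _ N' (W j) e)
   (fun e j => leq_b1 _) hE.
apply: hj0; move: j0; apply: (@f_inj p y y' hy hy').
apply: INR_eq; rewrite !INR_sum.
have key (z : 'I_(MM p) -> nat) :
  \big[Rplus/0%R]_(j < MM p) INR (z j * fS (Srow j)) =
  \big[Rplus/0%R]_(e : netV N' * netV N') (cost e.1 e.2 * INR (\sum_(j < MM p) z j * @chi _ N' (W j) e))%R.
  rewrite -weighted_cut; apply: eq_bigr => j _.
  by rewrite mult_INR -hW hm ?Srow_ne0 ?Srow_neT // mincut_G.
rewrite !key; apply: eq_bigr => e _; by rewrite (he e).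
Qed.


Lemma INR_exp2 p : INR (2 ^ p)%N = (2 ^ p)%R.
Proof.
elim: p => [|p IH]; first by rewrite expn0.
by rewrite expnS mult_INR IH /=; field.
Qed.

Lemma final_real (p n : nat) : (4 <= p)%N -> (2 ^ p <= n * n)%N ->
  (Rpower 2 (1/3 * INR p.+2) <= INR n)%R.
Proof.
move=> hp hn.
have hp' : (4 <= INR p)%R by have := le_INR 4 p (elimT leP hp); rewrite /=; lra.
have ha : (0 < Rpower 2 (1/3 * INR p.+2))%R by rewrite /Rpower; apply: exp_pos.
have hsq : (Rpower 2 (1/3 * INR p.+2) * Rpower 2 (1/3 * INR p.+2) = Rpower 2 (2/3 * INR p.+2))%R.
  by rewrite -Rpower_plus; f_equal; lra.
have hle : (Rpower 2 (2/3 * INR p.+2) <= Rpower 2 (INR p))%R.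
  apply: Rle_Rpower; first lra.
  rewrite !S_INR; lra.
rewrite Rpower_pow in hle; last lra.
have hN : (2 ^ p <= INR n * INR n)%R.
  by rewrite -INR_exp2 -mult_INR; apply: le_INR; apply/leP.
have hn0 : (0 <= INR n)%R by apply: pos_INR.
nra.
Qed.

Theorem theorem1p2 :
  exists alpha : R, (0 < alpha)%R /\
    forall k : nat, (5 < k)%N ->
      exists N : network k, terminal_bipartite N /\
        forall N' : network k, mimicking N' N ->
          (Rpower 2 (alpha * INR k) <= INR #|netV N'|)%R.
Proof.
exists (1/3)%R; split; first lra.
case=> [|[|p]] // hk.
exists (GG p); split; first exact: GG_bip.
move=> N' hm; apply: final_real; last exact: GG_lower hm.
by [].
Qed.
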